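(* Let $A$ be a subring of $\mathbb{R}$ and let $P_A$ be as in the context. (1) If $A$ has a unit $c\neq\pm1$, then $\infty\in P_A$. (2) If the only units of $A$ are $\pm1$, then $\infty\notin P_A$.
   Context: $PSL_2(A)$ acts on $\mathbb{R}\cup\{\infty\}$ by Möbius transformations $t\mapsto(at+b)/(ct+d)$. An element is hyperbolic if the absolute value of its trace exceeds $2$. $P_A\subseteq\mathbb{R}\cup\{\infty\}$ denotes the set of fixed points of hyperbolic elements of $PSL_2(A)$. *)

(* Defs.v *)
From HB Require Import structures.
From mathcomp Require Import all_boot all_order all_algebra.
From mathcomp Require Import Rstruct.
From Stdlib Require Import Reals.
Set Implicit Arguments. Unset Strict Implicit. Unset Printing Implicit Defensive.
Import Order.TTheory GRing.Theory Num.Theory.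
Local Open Scope ring_scope.

Definition is_subring (A : {pred R}) : Prop :=
  [/\ (1 : R) \in A,
      (forall x y, x \in A -> y \in A -> x - y \in A) &
      (forall x y, x \in A -> y \in A -> x * y \in A)].

Definition unit_of (A : {pred R}) (u : R) : Prop :=
  u \in A /\ exists v, v \in A /\ u * v = 1.

(* The extended real line R ∪ {∞}: None stands for ∞. *)
Notation projR := (option R).

Definition mobius (M : 'M[R]_2) (t : projR) : projR :=
  let a := M ord0 ord0 in let b := M ord0 ord_max in
  let c := M ord_max ord0 in let d := M ord_max ord_max in
  match t with
  | None => if c == 0 then None else Some (a / c)
  | Some x => if c * x + d == 0 then None else Some ((a * x + b) / (c * x + d))
  end.

(* Matrices of SL_2(A).  PSL_2(A) = SL_2(A)/{±1}; since M and -M have the same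
   Möbius action and the same |trace|, we quantify over representatives in SL_2(A). *)
Definition in_SL2 (A : {pred R}) (M : 'M[R]_2) : Prop :=
  (forall i j, M i j \in A) /\ \det M = 1.

Definition hyperbolic (M : 'M[R]_2) : Prop := 2 < `|\tr M|.

Definition P_A (A : {pred R}) (t : projR) : Prop :=
  exists M : 'M[R]_2, in_SL2 A M /\ hyperbolic M /\ mobius M t = t.

(* Main.v *)
Require Import Defs.
From HB Require Import structures.
From mathcomp Require Import all_boot all_order all_algebra.
From mathcomp Require Import Rstruct.
From Stdlib Require Import Reals.
From mathcomp Require Import ring lra.
Import Order.TTheory GRing.Theory Num.Theory.
Local Open Scope ring_scope.

Lemma det22 (M : 'M[R]_2) : \det M =
  M ord0 ord0 * M ord_max ord_max - M ord0 ord_max * M ord_max ord0.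
Proof.
rewrite (expand_det_row _ ord0) !big_ord_recl big_ord0 addr0.
rewrite /cofactor !det_mx11 /= !mxE /=.
have E : forall (j:'I_2) (i:'I_1), lift j i = if j == ord0 then ord_max else ord0.
  move=> j i; apply/val_inj; rewrite /= /bump (ord1 i) /=.
  by case: j => [[|[|k]] ?] //=.
rewrite !E /= expr0 expr1 mul1r; ring.
Qed.

Lemma tr22 (M : 'M[R]_2) : \tr M = M ord0 ord0 + M ord_max ord_max.
Proof.
rewrite /mxtrace !big_ord_recl big_ord0 addr0.
have E3 : (lift ord0 ord0 : 'I_2) = ord_max by apply/val_inj.
by rewrite E3.
Qed.

Theorem mainTheorem11 (A : {pred R}) (hA : is_subring A) :
  ((exists c : R, unit_of A c /\ c <> 1 /\ c <> -1) -> P_A A None) /\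
  ((forall u : R, unit_of A u -> u = 1 \/ u = -1) -> ~ P_A A None).
Proof.
case: hA => A1 AB AM.
have A0 : (0 : R) \in A by have := AB _ _ A1 A1; rewrite subrr.
split.
- move=> [c [[cA [v [vA cv]]] [c1 c2]]].
  pose M : 'M[R]_2 := \matrix_(i, j) (if i == j then (if i == ord0 then c else v) else 0).
  exists M; split; [split|split].
  + by move=> i j; rewrite mxE; case: (i == j) => //; case: (i == ord0).
  + by rewrite det22 !mxE /= mulr0 subr0.
  + rewrite /hyperbolic tr22 !mxE /=.
    have hcv : c != v.
      apply/eqP => E; move: cv; rewrite -E => cc.
      have : (c - 1) * (c + 1) == 0 by rewrite mulrDr mulrBl cc; apply/eqP; ring.
      rewrite mulf_eq0 subr_eq0 addr_eq0 => /orP [/eqP|/eqP]; by [].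
    have hp : 0 < (c - v) ^+ 2.
      by rewrite lt_neqAle sqr_ge0 andbT eq_sym sqrf_eq0 subr_eq0.
    rewrite ltr_normr; apply/negPn/negP; rewrite negb_or -!leNgt => /andP [h1 h2].
    nra.
  + by rewrite /mobius !mxE /= eqxx.
- move=> Hu [M [[MA dM] [hM fM]]].
  move: fM; rewrite /mobius; case: eqP => // c0 _.
  move: dM; rewrite det22 c0 mulr0 subr0 => ad.
  have [a1|a1] := Hu _ (conj (MA ord0 ord0) (ex_intro _ _ (conj (MA ord_max ord_max) ad))).
  + move: ad hM; rewrite a1 mul1r /hyperbolic tr22 a1 => ->.
    rewrite ger0_norm //; lra.
  + move: ad hM; rewrite a1 mulN1r /hyperbolic tr22 a1 => ad.
    have -> : M ord_max ord_max = -1 by rewrite -[M _ _]opprK ad.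
    rewrite -opprD normrN ger0_norm //; lra.
Qed.
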